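(* Let $w=w_1\cdots w_n$ be a word of length $n\ge 2$ and let $\mathrm{A}\ne\mathrm{M}$ be two letters used in $w$. Let $T=\{i\in[n]: w_i=\mathrm{A},\ w_{n-i+1}=\mathrm{M}\}$ and $t=|T|$. Then $f(w)\ge 4t$. Moreover, if $w$ uses only the letters $\mathrm{A}$ and $\mathrm{M}$, then $f(w)\ge n+t$.
   Context: A word of length $n$ is a sequence $w=w_1w_2\cdots w_n$ of letters (symbols). Let $[n]=\{1,\dots,n\}$. An $n$-grid is a function $G:[n]^2\to\Sigma$, where $\Sigma$ is an arbitrary set of letters. The $i$th row of $G$ contains $w$ if $G(i,j)=w_j$ for all $1\le j\le n$, or $G(i,j)=w_{n-j+1}$ for all $1\le j\le n$. The $j$th column contains $w$ if $G(i,j)=w_i$ for all $i$, or $G(i,j)=w_{n-i+1}$ for all $i$. The main diagonal contains $w$ if $G(i,i)=w_i$ for all $i$ or $G(i,i)=w_{n-i+1}$ for all $i$; the anti-diagonal contains $w$ if $G(i,n-i+1)=w_i$ for all $i$ or $G(i,n-i+1)=w_{n-i+1}$ for all $i$. Let $f(w,G)$ be the number of the $2n+2$ lines ($n$ rows, $n$ columns, $2$ diagonals) of $G$ that contain $w$, and $f(w)=\max_G f(w,G)$ over all $n$-grids $G$. *)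

(* Defs.v *)
(* Indices are 0-based: position i : 'I_n stands for i+1,
   and rev_ord i (value n-1-i) stands for n-i+1. *)
From mathcomp Require Import all_boot all_order.
Set Implicit Arguments. Unset Strict Implicit. Unset Printing Implicit Defensive.

Section Grids.
Variable T : finType.

Definition grid (n : nat) := {ffun 'I_n * 'I_n -> T}.

Definition row_contains n (w : n.-tuple T) (G : grid n) (i : 'I_n) : bool :=
  [forall j, G (i, j) == tnth w j] || [forall j, G (i, j) == tnth w (rev_ord j)].

Definition col_contains n (w : n.-tuple T) (G : grid n) (j : 'I_n) : bool :=
  [forall i, G (i, j) == tnth w i] || [forall i, G (i, j) == tnth w (rev_ord i)].

Definition diag_contains n (w : n.-tuple T) (G : grid n) : bool :=
  [forall i, G (i, i) == tnth w i] || [forall i, G (i, i) == tnth w (rev_ord i)].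

Definition antidiag_contains n (w : n.-tuple T) (G : grid n) : bool :=
  [forall i, G (i, rev_ord i) == tnth w i]
  || [forall i, G (i, rev_ord i) == tnth w (rev_ord i)].

Definition fwG n (w : n.-tuple T) (G : grid n) : nat :=
  #|[set i | row_contains w G i]| + #|[set j | col_contains w G j]|
  + diag_contains w G + antidiag_contains w G.

Definition fw n (w : n.-tuple T) : nat := \max_(G : grid n) fwG w G.

End Grids.

(* Main.v *)
Require Import Defs.
From mathcomp Require Import all_boot all_order.

Lemma fwG_le (T : finType) n (w : n.-tuple T) (G : grid T n) : fwG w G <= fw w.
Proof. by rewrite /fw; apply: (@leq_bigmax _ (fun G => fwG w G)). Qed.

Theorem lemma10 (T : finType) (n : nat) (w : n.-tuple T) (A M : T) :
  2 <= n -> A != M -> A \in w -> M \in w ->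
  let t := #|[set i : 'I_n | (tnth w i == A) && (tnth w (rev_ord i) == M)]| in
  4 * t <= fw w /\
  ((forall i : 'I_n, (tnth w i == A) || (tnth w i == M)) -> n + t <= fw w).
Proof.
move=> _ AM _ _ t.
set Ts := [set i : 'I_n | (tnth w i == A) && (tnth w (rev_ord i) == M)].
have hrev : injective (@rev_ord n) by apply: (can_inj (@rev_ordK n)).
split.
- set Rs := (@rev_ord n) @^-1: Ts.
  have cR : #|Rs| = t by rewrite card_preimset.
  have inR : forall x, (x \in Rs) = (tnth w (rev_ord x) == A) && (tnth w x == M).
    by move=> x; rewrite !inE rev_ordK.
  have inT : forall x, (x \in Ts) = (tnth w x == A) && (tnth w (rev_ord x) == M).
    by move=> x; rewrite inE.
  have dis : Ts :&: Rs = set0.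
    apply/setP => x; rewrite inE inR inT in_set0.
    apply/negP => /andP[/andP[/eqP h1 _] /andP[_ /eqP h2]].
    by move: AM; rewrite -h1 -h2 eqxx.
  have cU : #|Ts :|: Rs| = 2 * t.
    by have := cardsUI Ts Rs; rewrite dis cards0 addn0 cR => ->; rewrite addnn -mul2n.
  pose G := [ffun p : 'I_n * 'I_n => let (r, c) := p in
     if r \in Ts then tnth w c else if r \in Rs then tnth w (rev_ord c)
     else if c \in Ts then tnth w r else tnth w (rev_ord r)] : grid T n.
  have TnR : forall x, x \in Ts -> x \notin Rs.
    move=> x Hx; apply/negP => Hy.
    have : x \in Ts :&: Rs by rewrite in_setI Hx Hy.
    by rewrite dis inE.
  have rows : Ts :|: Rs \subset [set i | row_contains w G i].
    apply/subsetP => r; rewrite in_setU inE /row_contains => /orP [Hr|Hr].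
      by apply/orP; left; apply/forallP => j; rewrite ffunE Hr.
    have Hr' : r \notin Ts.
      by apply/negP => H; move: (TnR _ H); rewrite Hr.
    by apply/orP; right; apply/forallP => j; rewrite ffunE (negbTE Hr') Hr.
  have cols : Ts :|: Rs \subset [set j | col_contains w G j].
    apply/subsetP => c; rewrite in_setU inE /col_contains => /orP [Hc|Hc].
      apply/orP; left; apply/forallP => i; rewrite ffunE Hc.
      case: ifP => Hi.
        by move: Hi Hc; rewrite !inT => /andP[/eqP -> _] /andP[/eqP -> _].
      case: ifP => Hi2 //.
      by move: Hi2 Hc; rewrite inR inT => /andP[_ /eqP ->] /andP[_ /eqP ->].
    have Hc' : c \notin Ts.
      by apply/negP => H; move: (TnR _ H); rewrite Hc.
    apply/orP; right; apply/forallP => i; rewrite ffunE (negbTE Hc').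
    case: ifP => Hi.
      by move: Hi Hc; rewrite inR inT => /andP[_ /eqP ->] /andP[_ /eqP ->].
    case: ifP => Hi2 //.
    by move: Hi2 Hc; rewrite !inR => /andP[/eqP -> _] /andP[/eqP -> _].
  apply: (leq_trans _ (fwG_le _ _ w G)).
  apply: (@leq_trans (#|[set i | row_contains w G i]| + #|[set j | col_contains w G j]|));
    last by rewrite /fwG -addnA leq_addr.
  have := subset_leq_card rows; have := subset_leq_card cols.
  rewrite cU => h1 h2.
  have -> : 4 * t = 2 * t + 2 * t by rewrite -mulnDl.
  by apply: leq_add.
- move=> bin.
  pose G := [ffun p : 'I_n * 'I_n =>
     if tnth w p.1 == A then tnth w p.2 else tnth w (rev_ord p.2)] : grid T n.
  have rows : [set i | row_contains w G i] = setT.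
    apply/setP => r; rewrite !inE /row_contains.
    case E: (tnth w r == A).
      by apply/orP; left; apply/forallP => j; rewrite ffunE /= E.
    by apply/orP; right; apply/forallP => j; rewrite ffunE /= E.
  have cols : Ts \subset [set j | col_contains w G j].
    apply/subsetP => c; rewrite !inE /col_contains => /andP[/eqP Hc /eqP Hc2].
    apply/orP; left; apply/forallP => i; rewrite ffunE /=.
    case E: (tnth w i == A); first by rewrite Hc (eqP E).
    by move: (bin i); rewrite E /= => /eqP ->; rewrite Hc2.
  apply: (leq_trans _ (fwG_le _ _ w G)).
  apply: (@leq_trans (#|[set i | row_contains w G i]| + #|[set j | col_contains w G j]|));
    last by rewrite /fwG -addnA leq_addr.
  rewrite rows cardsT card_ord leq_add2l.
  by apply: subset_leq_card.
Qed.
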